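(* For any graph $G=(V,E)$ and any ordering of its edges, the output $P$ of the port-based greedy procedure (Algorithm 1) described in the context is a collection of vertex-disjoint paths.
   Context: Algorithm 1: initialize $P\gets\emptyset$. Each vertex $v$ has two ports $v^0,v^1$, initially free. Iterate over the edges of $G$ in the given ordering; upon visiting $e=(u,v)$: if $v^0$ and $u^0$ are free, add $e$ to $P$ and mark $v^0,u^0$ occupied; else if $v^1$ and $u^0$ are free, add $e$ to $P$ and mark $v^1,u^0$ occupied; else if $v^0$ and $u^1$ are free, add $e$ to $P$ and mark $v^0,u^1$ occupied; otherwise skip $e$. Return $P$. *)

(* Defs.v *)
From mathcomp Require Import all_boot.
Set Implicit Arguments. Unset Strict Implicit. Unset Printing Implicit Defensive.

Section Greedy.
Variable V : finType.

(* A simple graph on V given by an ordering of its edges: a sequence of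
   (oriented, as written in the ordering) pairs (u,v), with no loops and
   no edge listed twice (in either orientation). *)
Definition simple_edge_seq (s : seq (V * V)) : Prop :=
  all (fun e => e.1 != e.2) s /\ uniq [seq [set e.1; e.2] | e <- s].

(* Ports: (x, false) is port x^0, (x, true) is port x^1.
   State: (P, set of occupied ports). *)
Definition greedy_step (st : seq (V * V) * {set (V * bool)%type}) (e : V * V) :=
  let P := st.1 in let O := st.2 in
  let u := e.1 in let v := e.2 in
  if ((v, false) \notin O) && ((u, false) \notin O) then
    (rcons P e, (v, false) |: ((u, false) |: O))
  else if ((v, true) \notin O) && ((u, false) \notin O) then
    (rcons P e, (v, true) |: ((u, false) |: O))
  else if ((v, false) \notin O) && ((u, true) \notin O) then
    (rcons P e, (v, false) |: ((u, true) |: O))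
  else st.

Definition greedy_paths (s : seq (V * V)) : seq (V * V) :=
  (foldl greedy_step ([::], set0) s).1.

Definition adj (P : seq (V * V)) : rel V :=
  fun x y => ((x, y) \in P) || ((y, x) \in P).

Definition degree (P : seq (V * V)) (x : V) : nat :=
  count (fun e => (e.1 == x) || (e.2 == x)) P.

Definition has_cycle (P : seq (V * V)) : Prop :=
  exists c : seq V, [/\ 3 <= size c, uniq c & cycle (adj P) c].

Definition vertex_disjoint_paths (P : seq (V * V)) : Prop :=
  (forall x, degree P x <= 2) /\ ~ has_cycle P.

End Greedy.

(* Main.v *)
Require Import Defs.
From mathcomp Require Import all_boot.
Set Implicit Arguments. Unset Strict Implicit. Unset Printing Implicit Defensive.

Section S.
Variable V : finType.

Lemma adjC (P : seq (V*V)) x y : adj P x y = adj P y x.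
Proof. by rewrite /adj orbC. Qed.

Lemma no_cycle_ext (P : seq (V*V)) (e : V*V) (w o : V) :
  ~ has_cycle P -> w != o -> (e == (w,o)) || (e == (o,w)) -> degree P w = 0 ->
  ~ has_cycle (rcons P e).
Proof.
move=> nc nwo he d0 [c [szc uc cc]].
have nP: forall z, ((w,z) \in P) = false /\ ((z,w) \in P) = false.
  move=> z; move: d0 => /eqP; rewrite -leqn0 leqNgt -has_count => /hasPn H.
  by split; apply/negbTE/negP => /H /=; rewrite eqxx ?orbT.
have Hw: forall y, adj (rcons P e) w y -> y = o.
  move=> y; rewrite /adj !mem_rcons !in_cons !(nP y).1 !(nP y).2 !orbF.
  case/orP: he => /eqP -> /orP [] /eqP [] => *; subst => //; by move: nwo; rewrite eqxx.
case: (boolP (w \in c)) => wc.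
  case/rot_to: wc => i s' rs.
  have cc' : cycle (adj (rcons P e)) (w :: s') by rewrite -rs rot_cycle.
  have uc' : uniq (w :: s') by rewrite -rs rot_uniq.
  have sz' : 2 <= size s' by move: szc; rewrite -(size_rot i) rs.
  clear rs; case: s' sz' cc' uc' => [|y [|z r]] // _.
  rewrite [cycle _ _]/= rcons_path => /and4P [a1 _ _ a2] /andP [_ /andP [ny _]].
  rewrite adjC in a2.
  move: (Hw _ a1) (Hw _ a2) (mem_last z r) => Hy Hl ml.
  by rewrite Hl -Hy (negbTE ny) in ml.
apply: nc; exists c; split => //.
apply: (@sub_in_cycle _ (fun x => x != w)) cc; last by apply/allP => x xc; apply/eqP => xw; move: wc; rewrite -xw xc.
move=> a b an bn; rewrite /adj !mem_rcons !in_cons.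
case/orP: he => /eqP -> /=; rewrite !xpair_eqE;
  by rewrite (negbTE an) (negbTE bn) /= ?andbF.
Qed.

Lemma pc_add (O : {set V * bool}) u v bu bv x : u != v -> (v,bv) \notin O -> (u,bu) \notin O ->
  ((x,false) \in (v,bv) |: ((u,bu) |: O)) + ((x,true) \in (v,bv) |: ((u,bu) |: O)) =
  ((x,false) \in O) + ((x,true) \in O) + (x == v) + (x == u).
Proof.
move=> uv hv hu; rewrite !in_setU1 !xpair_eqE.
have [->|xv] := eqVneq x v.
  rewrite [v == u]eq_sym (negbTE uv) /=.
  by case: bv hv => /negbTE hv; rewrite hv /=; case: (_ \in _).
have [->|xu] := eqVneq x u.
  rewrite /=.
  by case: bu hu => /negbTE hu; rewrite hu /=; case: (_ \in _).
by rewrite /=; case: (_ \in _); case: (_ \in _).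
Qed.

Lemma degree_rcons (P : seq (V*V)) e x : degree (rcons P e) x = degree P x + ((e.1 == x) || (e.2 == x)).
Proof. by rewrite /degree -cats1 count_cat /= addn0. Qed.

Definition Inv (st : seq (V * V) * {set (V * bool)%type}) :=
  [/\ forall x, degree st.1 x = ((x,false) \in st.2) + ((x,true) \in st.2),
      forall x, (x,true) \in st.2 -> (x,false) \in st.2 & ~ has_cycle st.1].

Lemma edge_deg (u v x : V) : u != v -> ((u == x) || (v == x) : nat) = (x == v) + (x == u).
Proof.
move=> uv; rewrite [u == x]eq_sym [v == x]eq_sym.
have [->|xv] := eqVneq x v; first by rewrite eq_sym (negbTE uv) orbT.
by rewrite orbF.
Qed.

Lemma step_inv st e : e.1 != e.2 -> Inv st -> Inv (greedy_step st e).
Proof.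
case: st => P O; case: e => u v /= ne [/= Hd Hp Hc].
have iso : forall w, (w,false) \notin O -> degree P w = 0.
  move=> w hw; rewrite Hd (negbTE hw); case: (boolP ((w,true) \in O)) => // /Hp h.
  by rewrite h in hw.
have tf : (true == false) = false by [].
have ft : (false == true) = false by [].
rewrite /greedy_step /=.
case: ifP => [/andP [hv hu]|h1].
  split => /=.
  - by move=> x; rewrite degree_rcons pc_add // Hd edge_deg // addnA.
  - by move=> x; rewrite !in_setU1 !xpair_eqE !eqxx ?tf ?ft /= ?andbT ?andbF /= ?orbF => /Hp ->; rewrite !orbT.
  - by apply: (no_cycle_ext (w:=u) (o:=v)) => //; [rewrite eqxx | apply: iso].
case: ifP => [/andP [hv hu]|h2].
  have hv0 : (v,false) \in O by move: h1; rewrite hu andbT => /negbFE.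
  split => /=.
  - by move=> x; rewrite degree_rcons pc_add // Hd edge_deg // addnA.
  - move=> x; rewrite !in_setU1 !xpair_eqE !eqxx ?tf ?ft /= ?andbT ?andbF /= ?orbF.
    case/orP => [/eqP ->|]; first by rewrite hv0 !orbT.
    by move/Hp ->; rewrite !orbT.
  - by apply: (no_cycle_ext (w:=u) (o:=v)) => //; [rewrite eqxx | apply: iso].
case: ifP => [/andP [hv hu]|h3].
  have hu0 : (u,false) \in O by move: h1; rewrite hv /= => /negbFE.
  split => /=.
  - by move=> x; rewrite degree_rcons pc_add // Hd edge_deg // addnA.
  - move=> x; rewrite !in_setU1 !xpair_eqE !eqxx ?tf ?ft /= ?andbT ?andbF /= ?orbF.
    case/orP => [/eqP ->|]; first by rewrite hu0 !orbT.
    by move/Hp ->; rewrite !orbT.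
  - by apply: (no_cycle_ext (w:=v) (o:=u)) => //; [rewrite eq_sym | rewrite eqxx orbT | apply: iso].
by split.
Qed.

Lemma fold_inv s st : all (fun e => e.1 != e.2) s -> Inv st -> Inv (foldl (@greedy_step V) st s).
Proof.
elim: s st => //= e s IH st /andP [h hs] I; apply: IH => //; exact: step_inv.
Qed.

End S.

Theorem claim4p1 (V : finType) (s : seq (V * V)) :
  simple_edge_seq s -> vertex_disjoint_paths (greedy_paths s).
Proof.
case=> hs _.
have I0 : Inv ([::], set0 : {set V * bool}).
  split => /=; first by move=> x; rewrite !in_set0.
    by move=> x; rewrite in_set0.
  by case=> [[|a [|b c]]] [] //=.
have [Hd _ Hc] := fold_inv hs I0.
split => // x; rewrite /greedy_paths Hd.
by case: (_ \in _); case: (_ \in _).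
Qed.
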